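(* Let $n \ge 1$. Define $F_0(k) = k$ for all $k \ge 1$, and for $1 \le q \le n$ define $F_q$ on $\{1, \ldots, 2^n\}$ inductively by $F_q(1) = 0$ and, for $k \ge 2$, $$F_q(k) = \max_{1 \le k' \le k/2} \bigl( F_q(k') + F_q(k-k') + F_{q-1}(k') \bigr).$$ Then for all $1 \le q \le n$ and $1 \le k \le 2^n$, $$F_q(k) = \sum_{i=0}^{k-1} h_q(i).$$
   Context: For $i \in [0:2^n-1]$, $h(i)$ denotes the number of ones in the binary representation of $i$, and $h_q(i) = \binom{h(i)}{q}$ (so $h_0(i) = 1$ and $\sum_{i=0}^{k-1} h_0(i) = k$). The maximum is over integers $k'$. *)

(* Defs.v *)
From mathcomp Require Import all_boot.
Set Implicit Arguments. Unset Strict Implicit. Unset Printing Implicit Defensive.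

(* h i = number of ones in the binary representation of i:
   bit j of i is odd (i %/ 2^j); bits j >= i are 0 since i < 2^i. *)
Definition hw (i : nat) : nat := \sum_(j < i.+1) odd (i %/ 2 ^ j).

Definition hq (q i : nat) : nat := 'C(hw i, q).

(* Main.v *)
Require Import Defs.
From mathcomp Require Import all_boot.
From mathcomp Require Import zify.

Definition hw' N i := \sum_(0 <= j < N) odd (i %/ 2 ^ j).

Lemma hwE i : hw i = hw' i.+1 i.
Proof. by rewrite /hw' big_mkord. Qed.

Lemma hw'_ext N M i : i < 2 ^ N -> N <= M -> hw' M i = hw' N i.
Proof.
move=> iN NM; rewrite /hw' (big_cat_nat (n:=N) (leq0n N) NM) /=.
rewrite [X in _ + X]big1_seq ?addn0 // => j /andP[_].
rewrite mem_index_iota => /andP[Nj _].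
rewrite divn_small //; apply: leq_trans iN _; by rewrite leq_exp2l.
Qed.

Lemma lt2exp k : k < 2 ^ k.+1.
Proof. by rewrite expnS; have := ltn_expl k (isT : 1 < 2); lia. Qed.

Lemma hw2 i b : b <= 1 -> hw (i * 2 + b) = hw i + b.
Proof.
move=> b1.
have iN := lt2exp (i * 2 + b).
rewrite hwE -(hw'_ext _ (i * 2 + b).+2 _ iN) // /hw' big_nat_recl //.
rewrite expn0 divn1 oddD oddM /= andbF /=.
have -> : \sum_(0 <= j < (i * 2 + b).+1) odd ((i * 2 + b) %/ 2 ^ j.+1)
        = hw' (i * 2 + b).+1 i.
  apply: eq_bigr => j _; rewrite expnS divnMA divnMDl // (divn_small (m:=b)) ?addn0 //; lia.
rewrite hwE -(hw'_ext i.+1 (i*2+b).+1 i); last by lia.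
  by clear iN; case: b b1 => [|[|]] //= _; rewrite addnC.
exact: lt2exp.
Qed.

Definition S q k := \sum_(0 <= i < k) hq q i.
Definition Sm q k := if q is q'.+1 then S q' k else 0.
Definition Smm q k := if q is q'.+1 then Sm q' k else 0.

Lemma S0 q : S q 0 = 0. Proof. by rewrite /S big_geq. Qed.
Lemma Sm0 q : Sm q 0 = 0. Proof. by case: q => [|q] //=; rewrite S0. Qed.
Lemma SS q k : S q k.+1 = S q k + hq q k.
Proof. by rewrite /S big_nat_recr. Qed.
Lemma S0k k : S 0 k = k.
Proof. elim: k => [|k IH]; first by rewrite S0. by rewrite SS IH /hq bin0 addn1. Qed.

Lemma hq_even q k : hq q (k * 2) = hq q k.
Proof. by rewrite /hq -[k * 2]addn0 hw2 // addn0. Qed.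
Lemma hq_odd q k : hq q (k * 2 + 1) = hq q k + (if q is q'.+1 then hq q' k else 0).
Proof. rewrite /hq hw2 // addn1; case: q => [|q]; first by rewrite !bin0. by rewrite binS. Qed.

Lemma SmS q k : Sm q k.+1 = Sm q k + (if q is q'.+1 then hq q' k else 0).
Proof. by case: q => [|q] //=; rewrite SS. Qed.

Lemma Dbl q m : S q (m * 2) = S q m + S q m + Sm q m.
Proof.
elim: m => [|m IH]; first by rewrite !S0 Sm0.
have -> : m.+1 * 2 = (m * 2 + 1).+1 by lia.
rewrite SS hq_odd addn1 SS hq_even IH SS SmS; lia.
Qed.

Lemma Odd q m : S q (m * 2 + 1) = S q m.+1 + S q m + Sm q m.
Proof. rewrite addn1 SS Dbl hq_even SS; lia. Qed.

Lemma Dblm q m : Sm q (m * 2) = Sm q m + Sm q m + Smm q m.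
Proof. case: q => [|q] //=; exact: Dbl. Qed.
Lemma Oddm q m : Sm q (m * 2 + 1) = Sm q m.+1 + Sm q m + Smm q m.
Proof. case: q => [|q] //=; exact: Odd. Qed.

Lemma S_mono q k l : k <= l -> S q k <= S q l.
Proof.
move=> kl; rewrite -(subnKC kl); elim: (l - k) => [|j IH]; first by rewrite addn0.
rewrite addnS SS; lia.
Qed.
Lemma Sm_mono q k l : k <= l -> Sm q k <= Sm q l.
Proof. by case: q => [|q] //=; exact: S_mono. Qed.

Lemma Pineq N : forall q a b, a + b <= N -> a <= b ->
  S q a + S q b + Sm q a <= S q (a + b).
Proof.
elim: N => [|N IH] q a b.
  move=> H _; have -> : a = 0 by lia.
  by rewrite S0 Sm0 add0n addn0.
move=> HN ab.
have Q : forall q a b, a + b <= N -> a <= b ->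
    Sm q a + Sm q b + Smm q a <= Sm q (a + b).
  by move=> [|q'] a' b' ? ? //=; apply: IH.
case: (posnP a) => [->|a0]; first by rewrite S0 Sm0 add0n addn0.
have [c [ba [ea ba1]]] : exists c ba, a = c * 2 + ba /\ ba <= 1.
  by exists (a %/ 2), (a %% 2); split; [exact: divn_eq | rewrite -ltnS ltn_mod].
have [d [bb [eb bb1]]] : exists d bb, b = d * 2 + bb /\ bb <= 1.
  by exists (b %/ 2), (b %% 2); split; [exact: divn_eq | rewrite -ltnS ltn_mod].
subst a b.
case: ba ba1 ab a0 HN => [|[|//]] _ ab a0 HN; case: bb bb1 ab HN => [|[|//]] _ ab HN.
- rewrite !addn0 in ab a0 HN *.
  have -> : c * 2 + d * 2 = (c + d) * 2 by lia.
  rewrite !Dbl Dblm.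
  have := IH q c d ltac:(lia) ltac:(lia); have := Q q c d ltac:(lia) ltac:(lia); lia.
- rewrite addn0 in ab a0 HN *.
  have -> : c * 2 + (d * 2 + 1) = (c + d) * 2 + 1 by lia.
  rewrite !Odd !Dbl Dblm -addnS.
  have := IH q c d.+1 ltac:(lia) ltac:(lia); have := IH q c d ltac:(lia) ltac:(lia);
  have := Q q c d ltac:(lia) ltac:(lia); lia.
- rewrite addn0 in ab HN *.
  have -> : c * 2 + 1 + d * 2 = (c + d) * 2 + 1 by lia.
  rewrite !Odd !Dbl Oddm.
  have := IH q c.+1 d ltac:(lia) ltac:(lia); have := IH q c d ltac:(lia) ltac:(lia);
  have := Q q c d ltac:(lia) ltac:(lia); rewrite addSn; lia.
- have -> : c * 2 + 1 + (d * 2 + 1) = (c + d).+1 * 2 by lia.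
  rewrite !Odd Dbl Oddm.
  have := IH q c d.+1 ltac:(lia) ltac:(lia); rewrite addnS => H1.
  case: (ltngtP c d) => cd; [| lia |].
  + have := IH q c.+1 d ltac:(lia) ltac:(lia); rewrite addSn => H2.
    have := Q q c d ltac:(lia) ltac:(lia).
    have := @Sm_mono q _ _ (leqnSn (c + d)); lia.
  + subst d. have := Oddm q c. have := Odd q c.
    have -> : c + c = c * 2 by lia. rewrite addn1. lia.
Qed.

Lemma Smax q k : 2 <= k ->
  \max_(1 <= k' < k./2.+1) (S q k' + S q (k - k') + Sm q k') = S q k.
Proof.
move=> k2.
have hk := odd_double_half k; rewrite -muln2 in hk.
have ob := leq_b1 (odd k).
apply/eqP; rewrite eqn_leq; apply/andP; split.
  apply/bigmax_leqP_seq => i; rewrite mem_index_iota => /andP[i1 i2] _.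
  have := Pineq k q i (k - i) ltac:(lia) ltac:(lia).
  by have -> : i + (k - i) = k by lia.
apply: (bigmaxn_sup_seq k./2); first by rewrite mem_index_iota; lia.
  by [].
move: hk; case: (odd k) => /= hk.
  have -> : k - k./2 = k./2.+1 by lia.
  by rewrite -{1}hk add1n -addn1 Odd; lia.
have -> : k - k./2 = k./2 by lia.
by rewrite -{1}hk add0n Dbl.
Qed.

Theorem lemma3 (n : nat) (F : nat -> nat -> nat) :
  1 <= n ->
  (forall k, 1 <= k -> F 0 k = k) ->
  (forall q, 1 <= q <= n -> F q 1 = 0) ->
  (forall q k, 1 <= q <= n -> 2 <= k <= 2 ^ n ->
     F q k = \max_(1 <= k' < k./2.+1) (F q k' + F q (k - k') + F q.-1 k')) ->
  forall q k, 1 <= q <= n -> 1 <= k <= 2 ^ n ->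
    F q k = \sum_(0 <= i < k) hq q i.
Proof.
move=> n1 HF0 HF1 HFr.
have key : forall q, 1 <= q <= n -> forall k, 1 <= k <= 2 ^ n -> F q k = S q k.
  elim => [//|q IHq] qn k.
  elim/ltn_ind: k => k IHk kn.
  case: (leqP k 1) => k1.
    have -> : k = 1 by lia.
    by rewrite HF1 // SS S0 /hq /hw big_ord1.
  rewrite HFr; [|lia|lia].
  rewrite -Smax //.
  apply: eq_big_nat => i /andP[i1 i2].
  have hk := odd_double_half k; rewrite -muln2 in hk.
  rewrite IHk; [| lia | lia]. rewrite IHk; [| lia | lia].
  rewrite /=; clear IHk; case: q IHq qn => [|q] IHq qn.
    by rewrite HF0 // S0k.
  by rewrite IHq //; lia.
by move=> q k qn kn; exact: key.
Qed.
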